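(* For any $\beta\in(0,1)$ and any $b>0$, there exists a sequence of random variables $(X_n)_{n\ge 1}$ on some probability space such that (1) $n^\beta X_n \to 0$ in probability, (2) $|X_n|\le b$ almost surely for all $n$, and (3) the sequence $(n^\beta \bar X_n)_{n\ge1}$ is not uniformly tight, where $\bar X_n := \frac1n\sum_{i=1}^n X_i$. In particular, $n^\beta X_n\to 0$ in probability does not imply $n^\beta\bar X_n\to 0$ in probability.
   Context: A sequence of real random variables $(Z_n)_{n\ge1}$ is uniformly tight if for every $\varepsilon>0$ there exists $M<\infty$ with $\sup_n \Pr(|Z_n|>M)<\varepsilon$. $\bar X_n$ denotes the Cesàro mean $\frac1n\sum_{i=1}^n X_i$. *)

(* Defs.v *)
From HB Require Import structures.
From mathcomp Require Import all_boot all_order all_algebra.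
From mathcomp Require Import all_classical all_reals all_analysis.
Set Implicit Arguments. Unset Strict Implicit. Unset Printing Implicit Defensive.
Import Order.TTheory GRing.Theory Num.Theory.
Import numFieldNormedType.Exports.
Local Open Scope classical_set_scope.
Local Open Scope ring_scope.

(* Sequences are indexed by n >= 1; values at index 0 are irrelevant. *)

Definition cvg_in_prob0 {d} {T : measurableType d} {R : realType}
  (P : probability T R) (Z : nat -> T -> R) : Prop :=
  forall eps : R, 0 < eps ->
    (fun n => P [set w | eps < `|Z n w|]) @ \oo --> 0%E.

Definition uniformly_tight {d} {T : measurableType d} {R : realType}
  (P : probability T R) (Z : nat -> T -> R) : Prop :=
  forall eps : R, 0 < eps -> exists M : R,
    (ereal_sup [set P [set w | (M < `|Z n w|)%R] | n in [set n : nat | (0 < n)%N]]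
      < eps%:E)%E.

Definition cesaro_mean {T : Type} {R : realType} (X : nat -> T -> R) (n : nat) : T -> R :=
  fun w => (\sum_(1 <= i < n.+1) X i w) / n%:R.

(* Main.v *)
Require Import Defs.
From HB Require Import structures.
From mathcomp Require Import all_boot all_order all_algebra.
From mathcomp Require Import all_classical all_reals all_analysis.
From mathcomp Require Import measurable_realfun.
From mathcomp Require Import zify lra.
Import Order.TTheory GRing.Theory Num.Theory.
Import numFieldNormedType.Exports.
Local Open Scope classical_set_scope.
Local Open Scope ring_scope.
Section Constr.
Variable A : nat -> nat.

Fixpoint Tb (k : nat) : nat :=
  match k with 0 => 1%N | k'.+1 => (Tb k' + k'.+1 * (Tb k' + A k' + 1))%N end.
Definition Rb k := (Tb k + A k + 1)%N.
Lemma TbS k : Tb k.+1 = (Tb k + k.+1 * Rb k)%N. Proof. by []. Qed.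
Lemma Tb_lt k : (Tb k < Tb k.+1)%N.
Proof. rewrite TbS /Rb; lia. Qed.
Lemma Tb_ltn : {homo Tb : i j / (i < j)%N}.
Proof. exact: homo_ltn ltn_trans Tb_lt. Qed.
Lemma Tb_leq i j : (i <= j)%N -> (Tb i <= Tb j)%N.
Proof. rewrite leq_eqVlt => /orP[/eqP->//|h]. exact/ltnW/Tb_ltn. Qed.
Lemma Tb_ge1 k : (1 <= Tb k)%N.
Proof. by elim: k => //= k IH; lia. Qed.

Fixpoint blk (n : nat) : nat :=
  match n with 0 => 0%N | n'.+1 => if (Tb (blk n').+1 <= n'.+1)%N then (blk n').+1 else blk n' end.

Lemma blk_inv n : (Tb (blk n) <= maxn n 1)%N /\ (n < Tb (blk n).+1)%N.
Proof.
elim: n => [|n [IH1 IH2]] /=.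
  split => //=; lia.
case: ifPn => h; rewrite -?TbS in h *; split.
- lia.
- have := Tb_lt (blk n).+1; lia.
- lia.
- lia.
Qed.

Lemma blk_ge K n : (Tb K <= n)%N -> (K <= blk n)%N.
Proof.
move=> h; rewrite leqNgt; apply/negP => lt.
have [_ h2] := blk_inv n.
have := @Tb_leq _ _ lt; lia.
Qed.

Lemma blk_eq k i : (Tb k <= i < Tb k.+1)%N -> blk i = k.
Proof.
move=> /andP[h1 h2]; have := Tb_ge1 k => h0.
have [b1 b2] := blk_inv i.
case: (ltngtP (blk i) k) => // c.
- have := @Tb_leq _ _ c; lia.
- have := @Tb_leq _ _ c; lia.
Qed.

Definition jj n := ((n - Tb (blk n)) %/ Rb (blk n))%N.
End Constr.
Section Real.
Variable R : realType.

Definition Ath (beta : R) (k : nat) : nat :=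
  (Num.truncn (((k.+1 * k.+2)%N%:R : R) `^ beta^-1)).+1.

Lemma Ath_ok (beta : R) k n : 0 < beta -> (Ath beta k <= n)%N ->
  ((k.+1 * k.+2)%N%:R : R) <= n%:R `^ beta.
Proof.
move=> b0 hn.
set c : R := (k.+1 * k.+2)%N%:R.
have c0 : 0 <= c by rewrite /c.
have -> : c = (c `^ beta^-1) `^ beta.
  by rewrite -powRrM mulVf ?gt_eqF // powRr1.
apply: ge0_ler_powR; first exact: ltW.
- by rewrite nnegrE powR_ge0.
- by rewrite nnegrE.
apply: ltW; apply: (lt_le_trans (truncnS_gt _)).
by rewrite ler_nat.
Qed.

Lemma cover01 (k : nat) (w : R) : 0 <= w <= 1 ->
  exists j, (j <= k)%N /\ j%:R / k.+1%:R <= w <= j.+1%:R / k.+1%:R.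
Proof.
move=> /andP[w0 w1].
set x := w * k.+1%:R.
have x0 : 0 <= x by rewrite /x mulr_ge0.
have /andP[t1 t2] := truncn_itv x0.
have m0 : 0 < k.+1%:R :> R by rewrite ltr0n.
case: (leqP (Num.truncn x) k) => h.
- exists (Num.truncn x); split => //.
  rewrite !ler_pdivrMr // ler_pdivlMr // -/x t1 /=; exact: ltW.
- exists k; split => //.
  rewrite ler_pdivrMr // divff ?gt_eqF // w1 andbT -/x.
  apply: le_trans t1; rewrite ler_nat; exact: ltnW.
Qed.
End Real.
Section Main.
Variable R : realType.
Definition TT : measurableType _ :=
  ltac:(let t := type of (uniform_prob (@ltr01 R)) in match t with (set ?X -> _) => exact X end).
Definition Pu : probability TT R := uniform_prob (@ltr01 R).

Variables (beta b : R).
Definition Iv n : set R :=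
  `[ (jj (@Ath R beta) n)%:R / (blk (@Ath R beta) n).+1%:R,
     (jj (@Ath R beta) n).+1%:R / (blk (@Ath R beta) n).+1%:R ]%classic.
Lemma mIv n : measurable (Iv n : set TT).
Proof. exact: measurable_itv. Qed.
Definition Xs n : {RV Pu >-> R} := scale_mfun b (@indic_mfun _ TT R (Iv n : set TT) (mIv n)).
Lemma XsE n w : Xs n w = \1_(Iv n) w * b. Proof. by []. Qed.

Lemma P_Iv n : (Pu (Iv n) <= ((blk (@Ath R beta) n).+1%:R^-1)%:E)%E.
Proof.
change (Pu (Iv n)) with (\int[lebesgue_measure]_(x in (Iv n : set TT)) (uniform_pdf 0 1 x)%:E)%E.
apply: (@le_trans _ _ (\int[lebesgue_measure]_(x in (Iv n : set TT)) (cst 1%:E x))%E).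
  apply: ge0_le_integral => //.
  - exact: mIv.
  - by move=> x _; rewrite lee_fin uniform_pdf_ge0.
  - apply/measurable_EFinP; apply: measurable_funTS; exact: measurable_uniform_pdf.
  - move=> x _; rewrite /uniform_pdf lee_fin; case: ifP => // _.
    by rewrite subr0 invr1.
rewrite integral_cst; last exact: mIv.
rewrite mul1e /Iv.
set j := jj _ n; set m := (blk _ n).+1.
apply: (@le_trans _ _ (lebesgue_measure ([set` `[j%:R/m%:R, j.+1%:R/m%:R]] : set R))).
  by [].
rewrite lebesgue_measure_itv /=.
have m0 : 0 < m%:R :> R by rewrite ltr0n.
rewrite lte_fin ltr_pM2r ?invr_gt0 // ltr_nat ltnSn -EFinB lee_fin.
by rewrite -mulrBl -natr1 addrAC subrr add0r mul1r.
Qed.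

Lemma meas_gt (f : TT -> R) (M : R) : measurable_fun setT f ->
  measurable [set w : TT | M < `|f w|].
Proof.
move=> mf.
have mg : measurable_fun setT (fun w => `|f w|).
  exact: (measurableT_comp (@normr_measurable _ _) mf).
have := mg measurableT `]M, +oo[%classic (measurable_itv _).
rewrite setTI; congr measurable.
by apply/seteqP; split => w /=; rewrite in_itv /= andbT.
Qed.

End Main.

Theorem proposition1 (R : realType) (beta b : R) (hb0 : 0 < beta) (hb1 : beta < 1)
  (hb : 0 < b) :
  exists (d : measure_display) (T : measurableType d) (P : probability T R)
         (X : nat -> {RV P >-> R}),
    cvg_in_prob0 P (fun n w => (n%:R `^ beta) * X n w) /\
    (forall n : nat, (0 < n)%N -> {ae P, forall w, `|X n w| <= b}) /\
    ~ uniformly_tight P (fun n w => (n%:R `^ beta) * cesaro_mean (fun (i : nat) (t : T) => X i t) n w).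
Proof.
exists _, (TT R), (Pu R), (@Xs R beta b).
split; [|split].
- move=> eps e0.
  apply: (@squeeze_cvge _ _ _ _ (fun=> 0%E) _ (fun n => ((blk (@Ath R beta) n).+1%:R^-1)%:E)).
  + near=> n; apply/andP; split; first exact: measure_ge0.
    apply: le_trans; last exact: (@P_Iv R beta n).
    apply: le_measure; rewrite ?inE.
    * apply: meas_gt; apply: measurable_funM => //.
    * exact: mIv.
    * move=> w; rewrite /= mindicE /=.
      case: (boolP (w \in (Iv R beta n : set (TT R)))) => h; first by rewrite inE in h.
      by rewrite mul0r mulr0 normr0 => /lt_le_trans/(_ (ltW e0)); rewrite ltxx.
  + exact: cvg_cst.
  + have hb' : blk (@Ath R beta) @ \oo --> \oo.
      apply/cvgnyPge => K; near=> n; apply: blk_ge; near: n; exact: nbhs_infty_ge.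
    exact: (cvg_comp _ _ hb' cvge_harmonic).
- move=> n _; apply: aeW => w; rewrite XsE indicE; case: (w \in _) => /=.
    by rewrite mul1r ger0_norm // ltW.
  by rewrite mul0r normr0 ltW.
- move=> /(_ 1 ltr01) [M HM].
  set A := @Ath R beta.
  set k := Num.truncn (M / b).
  have Mk : M < k.+1%:R * b.
    by rewrite -ltr_pdivrMr // (lt_le_trans (truncnS_gt _)).
  set Rk := Rb A k.
  set n := (Tb A k.+1).-1.
  have hT := Tb_ge1 A k.
  have hRk : (Tb A k <= Rk /\ A k < Rk)%N by rewrite /Rk /Rb; lia.
  have hn : n = (Tb A k + k.+1 * Rk - 1)%N by rewrite /n TbS; lia.
  have n1 : (1 <= n)%N by rewrite hn; lia.
  have nle : (n <= k.+2 * Rk)%N by rewrite hn; lia.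
  have nA : (A k <= n)%N by rewrite hn; lia.
  have key : forall w : R, 0 <= w <= 1 ->
      M < `|n%:R `^ beta * cesaro_mean (fun i t => @Xs R beta b i t) n w|.
    move=> w /(@cover01 R k w) [j [jk /andP[wj1 wj2]]].
    set a := (Tb A k + j * Rk)%N.
    have Xb : forall i, (a <= i < a + Rk)%N -> @Xs R beta b i w = b.
      move=> i /andP[i1 i2].
      have bi : blk A i = k.
        apply: blk_eq; rewrite TbS -/Rk; apply/andP; split; first lia.
        have : (j * Rk + Rk <= k.+1 * Rk)%N by rewrite addnC -mulSn leq_mul2r ltnS jk orbT.
        lia.
      have ji : jj A i = j.
        rewrite /jj bi -/Rk.
        have -> : (i - Tb A k = j * Rk + (i - a))%N by lia.
        rewrite divnMDl; last lia.
        by rewrite divn_small ?addn0 //; lia.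
      rewrite /= mindicE /=.
      suff -> : w \in Iv R beta i by rewrite mul1r.
      by rewrite inE /= /Iv /= in_itv /= -/A ji bi wj1 wj2.
    have S0 : forall i, 0 <= @Xs R beta b i w.
      by move=> i; rewrite /= mindicE /=; case: (_ \in _); rewrite ?mul1r ?mul0r // ltW.
    have e1 : (1 <= a)%N by rewrite /a; lia.
    have e2 : (a <= a + Rk)%N by lia.
    have e3 : (a + Rk <= n.+1)%N.
      rewrite hn /a.
      have : (j * Rk + Rk <= k.+1 * Rk)%N by rewrite addnC -mulSn leq_mul2r ltnS jk orbT.
      lia.
    set S := \sum_(1 <= i < n.+1) @Xs R beta b i w.
    have SS : Rk%:R * b <= S.
      rewrite /S (big_cat_nat e1 (leq_trans e2 e3)) (big_cat_nat e2 e3) /=.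
      rewrite (@eq_big_nat _ _ _ a (a + Rk) _ (fun=> b) Xb).
      rewrite sumr_const_nat addKn mulr_natl.
      by rewrite ler_wpDl ?ler_wpDr //; apply: sumr_ge0 => i _; exact: S0.
    have S0' : 0 <= S by rewrite /S sumr_ge0.
    have N0 : 0 < n%:R :> R by rewrite ltr0n.
    have pn := @Ath_ok R beta k n hb0 nA.
    rewrite /cesaro_mean -/S ger0_norm; last by rewrite mulr_ge0 ?powR_ge0 ?divr_ge0.
    apply: (lt_le_trans Mk).
    rewrite mulrA ler_pdivlMr //.
    apply: (@le_trans _ _ (((k.+1 * k.+2)%N%:R) * (Rk%:R * b))); last first.
      by apply: ler_pM => //; rewrite mulr_ge0 // ltW.
    rewrite natrM -!mulrA; apply: ler_wpM2l => //.
    rewrite [b * _]mulrC [X in _ <= X]mulrA; apply: ler_wpM2r; first exact: ltW.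
    by rewrite -natrM ler_nat.
  have P01 : Pu R (`[0%R, 1%R]%classic : set (TT R)) = 1%:E.
    exact: integral_uniform_pdf1.
  have : (Pu R (`[0%R, 1%R]%classic : set (TT R)) <=
     ereal_sup [set Pu R [set w | (M < `|n%:R `^ beta *
        cesaro_mean (fun i t => @Xs R beta b i t) n w|)%R] | n in [set n : nat | (0 < n)%N]])%E.
    apply: le_trans; last first.
      by apply: ereal_sup_ubound; exists n.
    apply: le_measure; rewrite ?inE.
    + exact: measurable_itv.
    + apply: meas_gt; apply: measurable_funM => //.
      rewrite /cesaro_mean; apply: measurable_funM => //.
      apply: measurable_sum => i; exact: measurable_funM.
    + by move=> w /=; rewrite in_itv /=; apply: key.
  rewrite P01 => /(lt_le_trans HM); rewrite ltxx //.
Unshelve. all: by end_near.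
Qed.
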